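(* Let $x_1,x_2,y_1,y_2\in\mathbb{R}^2$ be four points not all on one line, and let $\mu=\mu_1\delta_{x_1}+\mu_2\delta_{x_2}$, $\nu=\nu_1\delta_{y_1}+\nu_2\delta_{y_2}$ be probability measures with positive weights and $[\mu]=[\nu]=0$. Let $M=\sum_i\mu_i\,x_i\otimes x_i$, $N=\sum_j\nu_j\,y_j\otimes y_j$, and write $N-M=\lambda_a\,a\otimes a+\lambda_b\,b\otimes b$ with $\lambda_a<0<\lambda_b$ and $a,b$ orthonormal. For $i,j\in\{1,2\}$ set $i'=3-i$, $j'=3-j$ and $$\gamma_{ij}=\mu_i\,\frac{\langle b,y_{j'}-x_i\rangle}{\langle b,y_{j'}-y_j\rangle}.$$ Then the inequalities $$\langle x_2-y_2,y_1-x_1\rangle\ge0\quad\text{and}\quad\langle x_1-y_2,y_1-x_2\rangle\ge0$$ hold if and only if $\gamma_{ij}\ge0$ for all $i,j\in\{1,2\}$.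
   Context: $[\mu]=\int x\,\mu(dx)$. Under the hypotheses, $N-M$ has one negative and one positive eigenvalue, so the decomposition above exists; $\gamma_{ij}$ does not depend on the sign choice of $b$. *)

(* Defs.v *)
From HB Require Import structures.
From mathcomp Require Import all_boot all_order all_algebra.
Set Implicit Arguments. Unset Strict Implicit. Unset Printing Implicit Defensive.
Import Order.TTheory GRing.Theory Num.Theory.
Local Open Scope ring_scope.

Section Defs.
Variable R : realFieldType.

Definition dot (u v : 'rV[R]_2) : R := \sum_(k < 2) u 0 k * v 0 k.

Definition tens (u v : 'rV[R]_2) : 'M[R]_2 := u^T *m v.

Definition on_one_line (p1 p2 p3 p4 : 'rV[R]_2) : Prop :=
  exists (p d : 'rV[R]_2), d != 0 /\
    forall z, z \in [:: p1; p2; p3; p4] -> exists t : R, z = p + t *: d.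

(* second moment of the discrete measure sum_i w_i delta_{z_i} *)
Definition second_moment (w : 'I_2 -> R) (z : 'I_2 -> 'rV[R]_2) : 'M[R]_2 :=
  \sum_(i < 2) w i *: tens (z i) (z i).

Definition barycenter (w : 'I_2 -> R) (z : 'I_2 -> 'rV[R]_2) : 'rV[R]_2 :=
  \sum_(i < 2) w i *: z i.

(* i' = 3 - i in 1-based indexing, i.e. rev_ord on 'I_2 *)
Definition gamma (mu : 'I_2 -> R) (x y : 'I_2 -> 'rV[R]_2) (b : 'rV[R]_2)
  (i j : 'I_2) : R :=
  mu i * (dot b (y (rev_ord j) - x i) / dot b (y (rev_ord j) - y j)).
End Defs.

(* index 1 and index 2 of the paper *)
Definition i1 : 'I_2 := ord0.
Definition i2 : 'I_2 := ord_max.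

(* Main.v *)
Require Import Defs.
From HB Require Import structures.
From mathcomp Require Import all_boot all_order all_algebra.
From mathcomp Require Import ring lra.
Import Order.TTheory GRing.Theory Num.Theory.
Local Open Scope ring_scope.

Section Core.
Variable R : realFieldType.

Lemma neg_case (a b c d : R) : 0 < c -> 0 < d -> a * b < c * d -> 
   0 <= (c - a) * (d - b) -> 0 <= c - a /\ 0 <= d - b.
Proof.
move=> cp dp H H1.
suff K : forall a b c d : R, 0 < c -> 0 < d -> a * b < c * d -> 
   0 <= (c - a) * (d - b) -> 0 <= c - a.
  split; first exact: K H1.
  by apply: (K b a d c) => //; [rewrite mulrC [d * c]mulrC | rewrite mulrC].
move=> {}a {}b {}c {}d {}cp {}dp {}H {}H1.
rewrite leNgt; apply/negP=> h.
have h2 : d - b <= 0.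
  rewrite leNgt; apply/negP=> h'.
  have : (c - a) * (d - b) < 0 by rewrite pmulr_llt0.
  lra.
have e1 : c < a by lra.
have e2 : d <= b by lra.
have : c * d < a * b.
  apply: (lt_le_trans (y := a * d)); first by rewrite ltr_pM2r.
  by rewrite ler_pM2l //; apply: lt_trans e1.
lra.
Qed.

Lemma final (m1 m2 n1 n2 t : R) :
  0 < m1 -> 0 < m2 -> 0 < n1 -> 0 < n2 -> m1 * m2 * t^+2 < n1 * n2 ->
  (0 <= (n1 - m1 * t) * (n2 - m2 * t) /\ 0 <= (n1 + m2 * t) * (n2 + m1 * t)) <->
  (0 <= n1 + m2 * t /\ 0 <= n2 - m2 * t /\ 0 <= n1 - m1 * t /\ 0 <= n2 + m1 * t).
Proof.
move=> m1p m2p n1p n2p H; split.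
  case=> H1 H2.
  have E1 : m1 * t * (m2 * t) < n1 * n2 by rewrite mulrACA -expr2.
  have E2 : - (m2 * t) * - (m1 * t) < n1 * n2 by rewrite mulrNN mulrACA -expr2 [m2 * m1]mulrC.
  have [A1 A2] := neg_case _ _ _ _ n1p n2p E1 H1.
  have H2' : 0 <= (n1 - - (m2 * t)) * (n2 - - (m1 * t)) by rewrite !opprK.
  have [A3 A4] := neg_case _ _ _ _ n1p n2p E2 H2'.
  rewrite !opprK in A3 A4; by split; [|split; [|split]].
by case=> h1 [h2 [h3 h4]]; split; apply: mulr_ge0.
Qed.

Lemma ge0_eq (x y : R) : x = y -> 0 <= x -> 0 <= y.
Proof. by move=> ->. Qed.

Lemma ge0_iff (y A K : R) : 0 < K -> y = A * K -> (0 <= y <-> 0 <= A).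
Proof. by move=> Kp ->; rewrite pmulr_lge0. Qed.

Lemma and_iff (P1 P2 Q1 Q2 S : Prop) :
  (P1 <-> Q1) -> (P2 <-> Q2) -> ((Q1 /\ Q2) <-> S) -> ((P1 /\ P2) <-> S).
Proof. tauto. Qed.

Lemma core (m1 m2 n1 n2 pa pb qa qb la lb : R) :
  0 < m1 -> 0 < m2 -> 0 < n1 -> 0 < n2 -> m1 + m2 = 1 -> n1 + n2 = 1 ->
  n1 * n2 * qa * qb = m1 * m2 * pa * pb ->
  n1 * n2 * qa^+2 - m1 * m2 * pa^+2 = la ->
  n1 * n2 * qb^+2 - m1 * m2 * pb^+2 = lb -> la < 0 -> 0 < lb ->
  (0 <= (-m1 * pa - (-n1 * qa)) * (n2 * qa - m2 * pa) + (-m1 * pb - (-n1 * qb)) * (n2 * qb - m2 * pb)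
   /\ 0 <= (m2 * pa - (-n1 * qa)) * (n2 * qa - (-m1 * pa)) + (m2 * pb - (-n1 * qb)) * (n2 * qb - (-m1 * pb)))
  <-> (0 <= m1 * ((-n1 * qb - m2 * pb) / (-n1 * qb - n2 * qb))
      /\ 0 <= m1 * ((n2 * qb - m2 * pb) / (n2 * qb - (-n1 * qb)))
      /\ 0 <= m2 * ((-n1 * qb - (-m1 * pb)) / (-n1 * qb - n2 * qb))
      /\ 0 <= m2 * ((n2 * qb - (-m1 * pb)) / (n2 * qb - (-n1 * qb)))).
Proof.
move=> m1p m2p n1p n2p Hm Hn E1 E2 E3 lan lbp.
have dp : 0 < m1 * m2 by rewrite mulr_gt0.
have cp : 0 < n1 * n2 by rewrite mulr_gt0.
have qb0 : qb != 0.
  apply/eqP=> q0; move: E3; rewrite q0 => E3.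
  have : 0 <= m1 * m2 * pb^+2 by rewrite mulr_ge0 ?sqr_ge0 // ltW.
  rewrite expr0n /= mulr0 in E3; lra.
have D1 : -n1 * qb - n2 * qb = - qb.
  by rewrite -mulrBl -opprD Hn mulN1r.
have D2 : n2 * qb - (-n1 * qb) = qb.
  by rewrite -mulrBl opprK addrC Hn mul1r.
rewrite D1 D2.
have [t Ht] : exists t, pb = t * qb by exists (pb / qb); rewrite divfK.
subst pb.
have G11 : (-n1 * qb - m2 * (t * qb)) / - qb = n1 + m2 * t by field.
have G12 : (n2 * qb - m2 * (t * qb)) / qb = n2 - m2 * t by field.
have G21 : (-n1 * qb - (- m1 * (t * qb))) / - qb = n1 - m1 * t by field.
have G22 : (n2 * qb - (- m1 * (t * qb))) / qb = n2 + m1 * t by field.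
rewrite G11 G12 G21 G22 !pmulr_rge0 //.
have qb2 : 0 < qb ^+ 2 by rewrite exprn_even_gt0.
have Ht2 : m1 * m2 * t^+2 < n1 * n2.
  have : 0 < qb ^+ 2 * (n1 * n2 - m1 * m2 * t ^+ 2).
    by move: lbp; rewrite -E3; congr (_ < _); ring.
  by rewrite pmulr_rgt0 // subr_gt0.
have E1' : n1 * n2 * qa = m1 * m2 * t * pa.
  apply: (mulIf qb0); rewrite E1; ring.
have [t0|t0] := eqVneq t 0.
  subst t.
  have qa0 : qa = 0.
    by move: E1'; rewrite mulr0 mul0r => /eqP; rewrite mulf_eq0 gt_eqF //= => /eqP.
  subst qa.
  rewrite ?mulr0 ?addr0 ?subr0 ?mulr0 ?mul0r ?oppr0.
  have h1 : 0 <= m1 * m2 * pa ^+ 2 + n1 * n2 * qb ^+ 2.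
    by rewrite addr_ge0 // mulr_ge0 ?sqr_ge0 // ltW.
  split=> _; last by split; apply: (ge0_eq _ _ _ h1); ring.
  by split; [|split; [|split]]; apply: ltW.
have Hpa : pa = n1 * n2 * qa / (m1 * m2 * t).
  by rewrite E1' [_ * pa]mulrC mulfK // !mulf_neq0 // gt_eqF.
have Kp : 0 < n1 * n2 * qa ^+ 2 / (m1 * m2 * t ^+ 2) + qb ^+ 2.
  apply: ltr_wpDl => //; apply: divr_ge0; apply: mulr_ge0; rewrite ?sqr_ge0 ?ltW //.
apply: (and_iff _ _ (0 <= (n1 - m1 * t) * (n2 - m2 * t)) (0 <= (n1 + m2 * t) * (n2 + m1 * t))).
- apply: (ge0_iff _ _ _ Kp); rewrite Hpa; field.
  by rewrite t0 !gt_eqF.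
- apply: (ge0_iff _ _ _ Kp); rewrite Hpa; field.
  by rewrite t0 !gt_eqF.
by apply: final.
Qed.
Implicit Types (u v w : 'rV[R]_2).

Lemma ord2P (i : 'I_2) : i = i1 \/ i = i2.
Proof. by case: i => [[|[|//]] Hi]; [left|right]; apply: val_inj. Qed.

Lemma forall2 (P : 'I_2 -> 'I_2 -> Prop) :
  (forall i j, P i j) <-> (P i1 i1 /\ P i1 i2 /\ P i2 i1 /\ P i2 i2).
Proof.
split; first by move=> H; do !split; apply: H.
move=> [H11 [H12 [H21 H22]]] i j.
by case: (ord2P i) => ->; case: (ord2P j) => ->.
Qed.

Lemma rev1 : rev_ord i1 = i2. Proof. by apply: val_inj. Qed.
Lemma rev2 : rev_ord i2 = i1. Proof. by apply: val_inj. Qed.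

Lemma sum2 (F : 'I_2 -> R) : \sum_(i < 2) F i = F i1 + F i2.
Proof.
rewrite !big_ord_recl big_ord0 addr0; congr (_ + F _); exact: val_inj.
Qed.

Lemma sum2M (F : 'I_2 -> 'M[R]_2) : \sum_(i < 2) F i = F i1 + F i2.
Proof.
rewrite !big_ord_recl big_ord0 addr0; congr (_ + F _); exact: val_inj.
Qed.

Lemma sum2V (F : 'I_2 -> 'rV[R]_2) : \sum_(i < 2) F i = F i1 + F i2.
Proof.
rewrite !big_ord_recl big_ord0 addr0; congr (_ + F _); exact: val_inj.
Qed.

Lemma dotE u v : dot u v = u 0 i1 * v 0 i1 + u 0 i2 * v 0 i2.
Proof. by rewrite /dot sum2. Qed.

Lemma dotC u v : dot u v = dot v u.
Proof. by rewrite !dotE mulrC [u 0 i2 * _]mulrC. Qed.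

Lemma dotBr u v w : dot u (v - w) = dot u v - dot u w.
Proof. rewrite !dotE !mxE; ring. Qed.

Lemma dotDr u v w : dot u (v + w) = dot u v + dot u w.
Proof. rewrite !dotE !mxE; ring. Qed.

Lemma dotZr u v (c : R) : dot u (c *: v) = c * dot u v.
Proof. rewrite !dotE !mxE; ring. Qed.

Lemma dot0r u : dot u 0 = 0.
Proof. rewrite !dotE !mxE; ring. Qed.

Lemma orth_t (a0 a1 b0 b1 : R) :
  a0 * a0 + a1 * a1 = 1 -> b0 * b0 + b1 * b1 = 1 -> a0 * b0 + a1 * b1 = 0 ->
  [/\ a0 * a0 + b0 * b0 = 1, a1 * a1 + b1 * b1 = 1 & a0 * a1 + b0 * b1 = 0].
Proof.
move=> Ha Hb Hab.
set k := a0 * b1 - a1 * b0.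
have e0 : b0 = - k * a1.
  apply/eqP; rewrite -subr_eq0; apply/eqP.
  transitivity (b0 * (1 - (a0 * a0 + a1 * a1)) + a0 * (a0 * b0 + a1 * b1)).
    rewrite /k; ring.
  by rewrite Ha Hab subrr; ring.
have e1 : b1 = k * a0.
  apply/eqP; rewrite -subr_eq0; apply/eqP.
  transitivity (b1 * (1 - (a0 * a0 + a1 * a1)) + a1 * (a0 * b0 + a1 * b1)).
    rewrite /k; ring.
  by rewrite Ha Hab subrr; ring.
have kk : k * k = 1.
  rewrite -Hb e0 e1.
  transitivity ((k * k) * (a0 * a0 + a1 * a1)); first by rewrite Ha mulr1.
  ring.
split.
- rewrite e0 -Ha; transitivity (a0 * a0 + (k * k) * a1 * a1); first by ring.
  by rewrite kk mul1r.
- rewrite e1 -Ha; transitivity (a1 * a1 + (k * k) * a0 * a0); first by ring.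
  by rewrite kk mul1r addrC.
- rewrite e0 e1; transitivity (a0 * a1 * (1 - k * k)); first by ring.
  by rewrite kk subrr mulr0.
Qed.

Lemma parseval a b u v : dot a a = 1 -> dot b b = 1 -> dot a b = 0 ->
  dot u v = dot a u * dot a v + dot b u * dot b v.
Proof.
rewrite !dotE => Ha Hb Hab.
have [H1 H2 H3] := orth_t _ _ _ _ Ha Hb Hab.
transitivity (u 0 i1 * v 0 i1 * (a 0 i1 * a 0 i1 + b 0 i1 * b 0 i1)
  + u 0 i2 * v 0 i2 * (a 0 i2 * a 0 i2 + b 0 i2 * b 0 i2)
  + (u 0 i1 * v 0 i2 + u 0 i2 * v 0 i1) * (a 0 i1 * a 0 i2 + b 0 i1 * b 0 i2)).
  by rewrite H1 H2 H3; ring.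
ring.
Qed.

Definition bil w (A : 'M[R]_2) w' :=
  w 0 i1 * A i1 i1 * w' 0 i1 + w 0 i1 * A i1 i2 * w' 0 i2
  + w 0 i2 * A i2 i1 * w' 0 i1 + w 0 i2 * A i2 i2 * w' 0 i2.

Lemma bilD w (A B : 'M[R]_2) w' : bil w (A + B) w' = bil w A w' + bil w B w'.
Proof. rewrite /bil !mxE; ring. Qed.
Lemma bilB w (A B : 'M[R]_2) w' : bil w (A - B) w' = bil w A w' - bil w B w'.
Proof. rewrite /bil !mxE; ring. Qed.
Lemma bilZ w (c : R) (A : 'M[R]_2) w' : bil w (c *: A) w' = c * bil w A w'.
Proof. rewrite /bil !mxE; ring. Qed.
Lemma bil_tens w u w' : bil w (tens u u) w' = dot w u * dot w' u.
Proof. rewrite /bil /tens !dotE !mxE !big_ord1 !mxE; ring. Qed.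
Lemma bil_sm w (m : 'I_2 -> R) z w' : bil w (second_moment m z) w' =
  m i1 * (dot w (z i1) * dot w' (z i1)) + m i2 * (dot w (z i2) * dot w' (z i2)).
Proof. by rewrite /second_moment sum2M bilD !bilZ !bil_tens. Qed.

Lemma comp (m1 m2 u1 u2 : R) : m2 != 0 -> m1 * u1 + m2 * u2 = 0 ->
  exists p, u1 = m2 * p /\ u2 = - m1 * p.
Proof.
move=> m20 H; exists (u1 / m2); split; first by rewrite mulrC divfK.
have e : m2 * u2 = - (m1 * u1) by apply/eqP; rewrite -addr_eq0 addrC H.
by apply: (mulfI m20); rewrite e; field.
Qed.
Lemma momE (n1 n2 q q' : R) : n1 + n2 = 1 ->
  n1 * (n2 * q * (n2 * q')) + n2 * (- n1 * q * (- n1 * q')) = n1 * n2 * q * q'.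
Proof. move=> H; transitivity (n1 * n2 * q * q' * (n1 + n2)); [ring | by rewrite H mulr1]. Qed.
End Core.
Arguments bil {R}.

Theorem lemma4p4 (R : realFieldType)
  (x y : 'I_2 -> 'rV[R]_2) (mu nu : 'I_2 -> R)
  (a b : 'rV[R]_2) (la lb : R) :
  ~ on_one_line (x i1) (x i2) (y i1) (y i2) ->
  (forall i, 0 < mu i) -> (forall j, 0 < nu j) ->
  mu i1 + mu i2 = 1 -> nu i1 + nu i2 = 1 ->
  barycenter mu x = 0 -> barycenter nu y = 0 ->
  second_moment nu y - second_moment mu x = la *: tens a a + lb *: tens b b ->
  la < 0 -> 0 < lb ->
  dot a a = 1 -> dot b b = 1 -> dot a b = 0 ->
  (0 <= dot (x i2 - y i2) (y i1 - x i1) /\ 0 <= dot (x i1 - y i2) (y i1 - x i2))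
  <-> (forall i j, 0 <= gamma mu x y b i j).
Proof.
move=> _ mup nup Hm Hn HBx HBy HM lan lbp Haa Hbb Hab.
have m20 : mu i2 != 0 by rewrite gt_eqF.
have n20 : nu i2 != 0 by rewrite gt_eqF.
have Bx w : mu i1 * dot w (x i1) + mu i2 * dot w (x i2) = 0.
  by have := congr1 (dot w) HBx; rewrite /barycenter sum2V dotDr !dotZr dot0r.
have By w : nu i1 * dot w (y i1) + nu i2 * dot w (y i2) = 0.
  by have := congr1 (dot w) HBy; rewrite /barycenter sum2V dotDr !dotZr dot0r.
have [pa [xa1 xa2]] := comp _ _ _ _ _ m20 (Bx a).
have [pb [xb1 xb2]] := comp _ _ _ _ _ m20 (Bx b).
have [qa [ya1 ya2]] := comp _ _ _ _ _ n20 (By a).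
have [qb [yb1 yb2]] := comp _ _ _ _ _ n20 (By b).
have Hba : dot b a = 0 by rewrite dotC.
have Mab := congr1 (fun A => bil a A b) HM.
have Maa := congr1 (fun A => bil a A a) HM.
have Mbb := congr1 (fun A => bil b A b) HM.
rewrite /= bilB !bil_sm bilD !bilZ !bil_tens in Mab.
rewrite /= bilB !bil_sm bilD !bilZ !bil_tens in Maa.
rewrite /= bilB !bil_sm bilD !bilZ !bil_tens in Mbb.
rewrite xa1 xb1 ya1 yb1 xa2 xb2 ya2 yb2 !momE // Haa Hab Hba Hbb in Mab.
rewrite xa1 ya1 xa2 ya2 !momE // Haa Hab in Maa.
rewrite xb1 yb1 xb2 yb2 !momE // Hba Hbb in Mbb.
have E1 : nu i1 * nu i2 * qa * qb = mu i1 * mu i2 * pa * pb.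
  by apply/eqP; rewrite -subr_eq0 Mab; apply/eqP; ring.
have E2 : nu i1 * nu i2 * qa ^+ 2 - mu i1 * mu i2 * pa ^+ 2 = la.
  by move: Maa; rewrite !expr2 !mulrA => ->; ring.
have E3 : nu i1 * nu i2 * qb ^+ 2 - mu i1 * mu i2 * pb ^+ 2 = lb.
  by move: Mbb; rewrite !expr2 !mulrA => ->; ring.
rewrite (parseval _ a b (x i2 - y i2) (y i1 - x i1) Haa Hbb Hab).
rewrite (parseval _ a b (x i1 - y i2) (y i1 - x i2) Haa Hbb Hab).
rewrite forall2 /gamma rev1 rev2 !dotBr xa1 xb1 ya1 yb1 xa2 xb2 ya2 yb2.
exact: (core _ _ _ _ _ _ _ _ _ _ _ (mup i1) (mup i2) (nup i1) (nup i2) Hm Hn E1 E2 E3 lan lbp).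
Qed.
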